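(* Let $p$ be an odd prime. Then the edge set of the complete graph $K_{p^2}$ can be partitioned into $(p^2-1)/4$ subgraphs, each isomorphic to $C_p \square C_p$.
   Context: $C_n$ denotes the cycle graph on $n$ vertices and $K_m$ the complete graph on $m$ vertices. For graphs $G=(V,E)$ and $G'=(V',E')$, the Cartesian product $G \square G'$ has vertex set $V\times V'$, with $\{(v,v'),(w,w')\}$ an edge iff either $\{v,w\}\in E$ and $v'=w'$, or $v=w$ and $\{v',w'\}\in E'$. Partitioning $K_m$ into copies of $G$ means decomposing its edge set into edge-disjoint subgraphs (on the vertex set of $K_m$) each isomorphic to $G$. *)

(* Defs.v *)
From mathcomp Require Import all_boot.
Set Implicit Arguments. Unset Strict Implicit. Unset Printing Implicit Defensive.

Definition cycle_adj (n : nat) : rel 'I_n :=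
  fun x y => (val y == x.+1 %% n) || (val x == y.+1 %% n).

Definition cart_adj (T U : finType) (e : rel T) (e' : rel U) : rel (T * U) :=
  fun a b => (e a.1 b.1 && (a.2 == b.2)) || ((a.1 == b.1) && e' a.2 b.2).

Definition image_edges (T : finType) (m : nat) (e : rel T) (f : T -> 'I_m)
  : {set {set 'I_m}} :=
  [set [set f a; f b] | a in T, b in T & e a b].

Definition edge_decomposition (m k : nat) (T : finType) (e : rel T)
  (F : 'I_k -> T -> 'I_m) : Prop :=
  (forall i, injective (F i)) /\
  (forall i, forall E, E \in image_edges e (F i) -> #|E| = 2) /\
  (forall E : {set 'I_m}, #|E| = 2 -> exists! i, E \in image_edges e (F i)).

(* Main.v *)
Require Import Defs.
From mathcomp Require Import all_boot all_order all_algebra.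
From mathcomp Require Import zify ring lra.
Set Implicit Arguments. Unset Strict Implicit. Unset Printing Implicit Defensive.
Import GRing.Theory.

Definition vec (n : nat) := ('I_(n.+3) * 'I_(n.+3))%type.

Definition vsub n (u v : vec n) : vec n := ((u.1 - v.1)%R, (u.2 - v.2)%R).
Definition vopp n (u : vec n) : vec n := ((- u.1)%R, (- u.2)%R).
Definition phi n (a b : vec n) (w : vec n) : vec n :=
  ((w.1 * a.1 + w.2 * b.1)%R, (w.1 * a.2 + w.2 * b.2)%R).

Lemma vecP n (u v : vec n) : val u.1 = val v.1 -> val u.2 = val v.2 -> u = v.
Proof. by case: u v => [u1 u2] [v1 v2] /= /val_inj -> /val_inj ->. Qed.

Lemma valD n (x y : 'I_(n.+3)) : val (x + y)%R = ((val x + val y) %% n.+3)%N.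
Proof. by []. Qed.
Lemma valN n (x : 'I_(n.+3)) : val (- x)%R = ((n.+3 - val x) %% n.+3)%N.
Proof. by []. Qed.
Lemma valnat n k : val ((k%:R)%R : 'I_(n.+3)) = (k %% n.+3)%N.
Proof. exact: (@val_Zp_nat n.+3 isT k). Qed.

Local Open Scope ring_scope.

Lemma phi_inj n (a b : vec n) :
  (a.1 * b.2 - a.2 * b.1) \is a GRing.unit -> injective (phi a b).
Proof.
move=> U [u1 u2] [v1 v2] E.
have e1 : u1 * a.1 + u2 * b.1 = v1 * a.1 + v2 * b.1 := congr1 fst E.
have e2 : u1 * a.2 + u2 * b.2 = v1 * a.2 + v2 * b.2 := congr1 snd E.
set du := (u1 - v1); set dv := (u2 - v2).
have E1 : du * a.1 + dv * b.1 = 0.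
  have -> : du * a.1 + dv * b.1 = (u1 * a.1 + u2 * b.1) - (v1 * a.1 + v2 * b.1) by rewrite /du /dv; ring.
  by rewrite e1 subrr.
have E2 : du * a.2 + dv * b.2 = 0.
  have -> : du * a.2 + dv * b.2 = (u1 * a.2 + u2 * b.2) - (v1 * a.2 + v2 * b.2) by rewrite /du /dv; ring.
  by rewrite e2 subrr.
have Hu : du * (a.1 * b.2 - a.2 * b.1) = 0 * (a.1 * b.2 - a.2 * b.1).
  have -> : du * (a.1 * b.2 - a.2 * b.1) = (du * a.1 + dv * b.1) * b.2 - (du * a.2 + dv * b.2) * b.1 by ring.
  by rewrite E1 E2; ring.
have Hv : dv * (a.1 * b.2 - a.2 * b.1) = 0 * (a.1 * b.2 - a.2 * b.1).
  have -> : dv * (a.1 * b.2 - a.2 * b.1) = (du * a.2 + dv * b.2) * a.1 - (du * a.1 + dv * b.1) * a.2 by ring.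
  by rewrite E1 E2; ring.
move: (mulIr U Hu) (mulIr U Hv); rewrite /du /dv => /eqP; rewrite subr_eq0 => /eqP ->.
by move/eqP; rewrite subr_eq0 => /eqP ->.
Qed.
Import GRing.Theory.

Local Close Scope ring_scope.
Definition xi h i := (i %/ h.+1).+1.
Definition ti h i := i %% h.+1.
Definition idx h x t := (x.-1 * h.+1 + t).

Lemma idx_lt h x t : 1 <= x <= h -> t <= h -> idx h x t < h * h.+1.
Proof. rewrite /idx => /andP [H1 H2] H3. nia. Qed.
Lemma xi_idx h x t : 1 <= x -> t <= h -> xi h (idx h x t) = x.
Proof. by move=> H1 H2; rewrite /xi /idx divnMDl // divn_small ?ltnS // addn0 prednK. Qed.
Lemma ti_idx h x t : t <= h -> ti h (idx h x t) = t.
Proof. by move=> H2; rewrite /ti /idx modnMDl modn_small ?ltnS. Qed.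
Lemma idx_xt h i : idx h (xi h i) (ti h i) = i.
Proof. by rewrite /idx /xi /ti /= -divn_eq. Qed.
Lemma xi_range h i : i < h * h.+1 -> 1 <= xi h i <= h.
Proof. by move=> H; rewrite /xi ltnS ltn_divLR. Qed.
Lemma ti_range h i : ti h i <= h.
Proof. by rewrite /ti -ltnS ltn_pmod. Qed.

Definition av n h i : vec n := (((xi h i)%:R)%R, (((2 * ti h i)%N)%:R)%R).
Definition bv n h i : vec n :=
  if (ti h i < h)%N then (((xi h i)%:R)%R, (((2 * ti h i).+1)%:R)%R) else (0%R, ((xi h i)%:R)%R).
Definition cls n h (d : vec n) : nat :=
  let d1 := val d.1 in let d2 := val d.2 in
  if d1 == 0%N then idx h (if (d2 <= h)%N then d2 else n.+3 - d2)%N h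
  else if (d1 <= h)%N then idx h d1 d2./2
  else idx h (n.+3 - d1)%N ((n.+3 - d2) %% n.+3)%N./2.

Lemma modsm n k : (k < n.+3)%N -> (k %% n.+3 = k)%N.
Proof. exact: modn_small. Qed.

Lemma half2 t : (2 * t)./2 = t.
Proof. by rewrite mul2n doubleK. Qed.
Lemma half2S t : (2 * t).+1./2 = t.
Proof. by rewrite mul2n -[_.+1]addn1 halfD odd_double /= addn0 doubleK. Qed.
Lemma negneg n k : k < n.+3 -> ((n.+3 - (n.+3 - k) %% n.+3) %% n.+3) = k.
Proof.
move=> Hk; case: k Hk => [|k] Hk; first by rewrite subn0 modnn subn0 modnn.
rewrite (@modsm n (n.+3 - k.+1)); last by lia.
by rewrite modsm; lia.
Qed.

Section Cls.
Variables (n h : nat).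
Hypothesis Hh : n.+3 = h.*2.+1.

Lemma cls_av i : (i < h * h.+1)%N -> cls h (av n h i) = i /\ cls h (vopp (av n h i)) = i.
Proof.
move=> Hi; have := xi_range Hi; have := ti_range h i; have := idx_xt h i.
rewrite /cls /av /vopp /= !valnat.
set x := xi h i; set t := ti h i => Hid Ht Hx.
have Hx1 : (0 < x)%N by rewrite /x /xi.
rewrite (modsm (_ : x < n.+3)%N); last by lia.
rewrite (modsm (_ : 2 * t < n.+3)%N); last by lia.
rewrite (modsm (_ : n.+3 - x < n.+3)%N); last by lia.
split.
  rewrite (_ : (x == 0) = false); last by lia.
  by rewrite Hx half2.
rewrite (_ : (n.+3 - x == 0) = false); last by lia.
rewrite (_ : (n.+3 - x <= h) = false); last by lia.
by rewrite negneg ?half2; [rewrite (_ : n.+3 - (n.+3 - x) = x) //; lia | lia].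
Qed.

Lemma cls_bv i : (i < h * h.+1)%N -> cls h (bv n h i) = i /\ cls h (vopp (bv n h i)) = i.
Proof.
move=> Hi; have := xi_range Hi; have := ti_range h i; have := idx_xt h i.
rewrite /bv.
set x := xi h i; set t := ti h i => Hid Ht Hx.
have Hx1 : (0 < x)%N by rewrite /x /xi.
have Hxh : (x <= h)%N by case/andP: Hx.
case: ifP => Hth; rewrite /cls /vopp /= ?valnat.
  rewrite (modsm (_ : x < n.+3)%N); last by lia.
  rewrite (modsm (_ : (2 * t).+1 < n.+3)%N); last by lia.
  rewrite (modsm (_ : n.+3 - x < n.+3)%N); last by lia.
  split.
    rewrite (_ : (x == 0) = false); last by lia.
    by rewrite Hxh half2S.
  rewrite (_ : (n.+3 - x == 0) = false); last by lia.
  rewrite (_ : (n.+3 - x <= h) = false); last by lia.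
  by rewrite negneg ?half2S; [rewrite (_ : n.+3 - (n.+3 - x) = x) //; lia | lia].
have Eth : t = h by lia.
rewrite (modsm (_ : x < n.+3)%N); last by lia.
rewrite subn0 modnn eqxx.
rewrite (modsm (_ : n.+3 - x < n.+3)%N); last by lia.
split; first by rewrite Hxh -Hid Eth.
rewrite (_ : (n.+3 - x <= h) = false); last by lia.
rewrite (_ : n.+3 - (n.+3 - x) = x); [by rewrite -Hid Eth | lia].
Qed.

Lemma par y : y = 2 * y./2 /\ ~~ odd y \/ y = (2 * y./2).+1 /\ odd y.
Proof.
have := odd_double_half y; case: (odd y) => /= E; [right|left]; split => //; lia.
Qed.

Lemma cls_ex (d : vec n) : (val d.1 != 0) || (val d.2 != 0) ->
  (cls h d < h * h.+1)%N /\
  (d = av n h (cls h d) \/ d = vopp (av n h (cls h d)) \/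
   d = bv n h (cls h d) \/ d = vopp (bv n h (cls h d))).
Proof.
move=> Hd.
have L1 : (val d.1 < n.+3)%N := ltn_ord d.1.
have L2 : (val d.2 < n.+3)%N := ltn_ord d.2.
rewrite /cls.
case: eqP => E1.
  set y := (if _ then _ else _).
  have Hy : (1 <= y <= h)%N by rewrite /y; case: ifP; lia.
  have Hh0 : (h <= h)%N by [].
  split; first exact: idx_lt.
  rewrite /bv xi_idx ?ti_idx //; last by lia.
  rewrite ltnn; right; right.
  rewrite /y; case: ifP => Hle; [left | right]; apply: vecP => /=; rewrite ?valnat.
  - by rewrite E1.
  - rewrite modsm //; lia.
  - by rewrite E1 subn0 modnn.
  - by rewrite negneg.
case: ifP => Hle.
  have Ht : ((val d.2)./2 <= h)%N by lia.
  have Hx : (1 <= val d.1 <= h)%N by lia.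
  split; first exact: idx_lt.
  rewrite /av /bv xi_idx ?ti_idx //; last by lia.
  case: (par (val d.2)) => [[Ev Od]|[Ev Od]].
    left; apply: vecP => /=; rewrite ?valnat modsm //; last by lia.
  right; right; left.
  rewrite (_ : ((val d.2)./2 < h)%N = true); last by lia.
  apply: vecP => /=; rewrite ?valnat modsm //; last by lia.
set y := ((n.+3 - val d.2) %% n.+3)%N.
have Hy : (y < n.+3)%N by rewrite /y ltn_pmod.
have Ht : (y./2 <= h)%N by lia.
have Hx : (1 <= n.+3 - val d.1 <= h)%N by lia.
split; first exact: idx_lt.
rewrite /av /bv xi_idx ?ti_idx //; last by lia.
case: (par y) => [[Ev Od]|[Ev Od]].
  right; left; apply: vecP => /=; rewrite ?valnat.
    by rewrite negneg.
  by rewrite -Ev (modsm Hy) /y negneg.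
right; right; right.
rewrite (_ : (y./2 < h)%N = true); last by lia.
apply: vecP => /=; rewrite ?valnat.
  by rewrite negneg.
by rewrite -Ev (modsm Hy) /y negneg.
Qed.
End Cls.

Lemma adjE n (x y : 'I_(n.+3)) : cycle_adj x y = (y == x + 1)%R || (x == y + 1)%R.
Proof. by rewrite /cycle_adj -!val_eqE /= !addn1. Qed.

Lemma unit_nat n x : prime n.+3 -> (0 < x < n.+3)%N -> ((x%:R : 'I_(n.+3)) \is a GRing.unit)%R.
Proof.
move=> hp Hx; rewrite (@unitZpE n.+3 x isT) prime_coprime //.
by case/andP: Hx => H1 H2; rewrite gtnNdvd.
Qed.

Local Open Scope ring_scope.

Lemma det_unit n h i : prime n.+3 -> n.+3 = h.*2.+1 -> (i < h * h.+1)%N ->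
  ((av n h i).1 * (bv n h i).2 - (av n h i).2 * (bv n h i).1) \is a GRing.unit.
Proof.
move=> hp Hh Hi.
have := xi_range Hi; have := ti_range h i.
rewrite /av /bv; set x := xi h i; set t := ti h i => Ht Hx.
have Hx1 : (0 < x)%N by rewrite /x /xi.
have U : (x%:R : 'I_(n.+3)) \is a GRing.unit by apply: unit_nat => //; lia.
case: ifP => _ /=.
  rewrite -[(2 * t).+1]addn1 natrD.
  have -> : x%:R * ((2 * t)%:R + 1%:R) - (2 * t)%:R * x%:R = x%:R :> 'I_(n.+3) by ring.
  exact: U.
by rewrite mulr0 subr0 unitrM U.
Qed.

Lemma vsub_a n (a b : vec n) u1 u2 :
  vsub (phi a b (u1 + 1, u2)) (phi a b (u1, u2)) = a.
Proof. by case: a b => a1 a2 [b1 b2]; rewrite /vsub /phi /=; congr pair; ring. Qed.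
Lemma vsub_na n (a b : vec n) u1 u2 :
  vsub (phi a b (u1, u2)) (phi a b (u1 + 1, u2)) = vopp a.
Proof. by case: a b => a1 a2 [b1 b2]; rewrite /vsub /phi /vopp /=; congr pair; ring. Qed.
Lemma vsub_b n (a b : vec n) u1 u2 :
  vsub (phi a b (u1, u2 + 1)) (phi a b (u1, u2)) = b.
Proof. by case: a b => a1 a2 [b1 b2]; rewrite /vsub /phi /=; congr pair; ring. Qed.
Lemma vsub_nb n (a b : vec n) u1 u2 :
  vsub (phi a b (u1, u2)) (phi a b (u1, u2 + 1)) = vopp b.
Proof. by case: a b => a1 a2 [b1 b2]; rewrite /vsub /phi /vopp /=; congr pair; ring. Qed.

Lemma diff_cls n h i (w1 w2 : vec n) : n.+3 = h.*2.+1 -> (i < h * h.+1)%N ->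
  cart_adj (@cycle_adj n.+3) (@cycle_adj n.+3) w1 w2 ->
  cls h (vsub (phi (av n h i) (bv n h i) w2) (phi (av n h i) (bv n h i) w1)) = i.
Proof.
move=> Hh Hi; have [A1 A2] := cls_av Hh Hi; have [B1 B2] := cls_bv Hh Hi.
case: w1 w2 => [u1 u2] [v1 v2]; rewrite /cart_adj /= !adjE.
case/orP => /andP [H1 H2].
  move/eqP: H2 => <-; case/orP: H1 => /eqP ->; by rewrite ?vsub_a ?vsub_na.
move/eqP: H1 => <-; case/orP: H2 => /eqP ->; by rewrite ?vsub_b ?vsub_nb.
Qed.

Local Close Scope ring_scope.
Lemma cardV n : #|{: vec n}| = (n.+3 ^ 2)%N.
Proof. by rewrite card_prod card_ord. Qed.

Definition enc n (v : vec n) : 'I_(n.+3 ^ 2) := cast_ord (cardV n) (enum_rank v).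
Definition dec n (k : 'I_(n.+3 ^ 2)) : vec n := enum_val (cast_ord (esym (cardV n)) k).
Lemma encK n : cancel (@enc n) (@dec n).
Proof. by move=> v; rewrite /dec /enc cast_ordK enum_rankK. Qed.
Lemma decK n : cancel (@dec n) (@enc n).
Proof. by move=> k; rewrite /dec /enc enum_valK cast_ordKV. Qed.

Lemma adj_sym n (w1 w2 : vec n) :
  cart_adj (@cycle_adj n.+3) (@cycle_adj n.+3) w1 w2 =
  cart_adj (@cycle_adj n.+3) (@cycle_adj n.+3) w2 w1.
Proof.
by rewrite /cart_adj /cycle_adj (orbC (val w2.1 == _)) (orbC (val w2.2 == _)) (eq_sym w2.2) (eq_sym w2.1).
Qed.

Lemma adj_irr n (w : vec n) : cart_adj (@cycle_adj n.+3) (@cycle_adj n.+3) w w = false.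
Proof.
rewrite /cart_adj !adjE !eqxx /= !orbb andbT.
have H (x : 'I_(n.+3)) : (x == x + 1)%R = false.
  apply/eqP => /(congr1 (fun y => y - x)%R); rewrite subrr addrC addKr => /eqP.
  by [].
by rewrite !H.
Qed.

Lemma set2_eq (T : finType) (X Y A B : T) : [set X; Y] = [set A; B] -> X != Y ->
  (X = A /\ Y = B) \/ (X = B /\ Y = A).
Proof.
move=> E XY.
have HX : X \in [set A; B] by rewrite -E !inE eqxx.
have HY : Y \in [set A; B] by rewrite -E !inE eqxx orbT.
move: HX HY XY; rewrite !inE => /orP [] /eqP -> /orP [] /eqP ->; rewrite ?eqxx //; auto.
Qed.

Lemma vsubK n (u v x : vec n) : vsub u x = vsub v x -> u = v.
Proof.
case: u v x => [u1 u2] [v1 v2] [x1 x2]; rewrite /vsub => E.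
have E1 : (u1 - x1 = v1 - x1)%R := congr1 fst E.
have E2 : (u2 - x2 = v2 - x2)%R := congr1 snd E.
by move/subIr: E1 => ->; move/subIr: E2 => ->.
Qed.

Lemma step_ex n (a b w D : vec n) : (D = a \/ D = vopp a \/ D = b \/ D = vopp b) ->
  exists w', cart_adj (@cycle_adj n.+3) (@cycle_adj n.+3) w w' /\
             vsub (phi a b w') (phi a b w) = D.
Proof.
case: w => [w1 w2] [->|[->|[->|->]]].
- exists (w1 + 1, w2)%R; split; last exact: vsub_a.
  by rewrite /cart_adj !adjE /= !eqxx.
- exists (w1 - 1, w2)%R; split.
    by rewrite /cart_adj !adjE /= subrK !eqxx orbT.
  by rewrite -{2}(subrK 1 w1)%R vsub_na.
- exists (w1, w2 + 1)%R; split; last exact: vsub_b.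
  by rewrite /cart_adj !adjE /= !eqxx orbT.
- exists (w1, w2 - 1)%R; split.
    by rewrite /cart_adj !adjE /= subrK !eqxx !orbT.
  by rewrite -{2}(subrK 1 w2)%R vsub_nb.
Qed.

Theorem theorem1 (p : nat) (hp : prime p) (hodd : odd p) :
  exists F : 'I_((p ^ 2 - 1) %/ 4) -> 'I_p * 'I_p -> 'I_(p ^ 2),
    edge_decomposition (cart_adj (@cycle_adj p) (@cycle_adj p)) F.
Proof.
move: hp hodd; case: p => [|[|[|n]]] // hp hodd.
have [h Hh] : exists h, n.+3 = h.*2.+1.
  exists (n.+3)./2; have := odd_double_half n.+3; rewrite hodd /=; lia.
have HN : ((n.+3 ^ 2 - 1) %/ 4 = h * h.+1)%N.
  rewrite Hh.
  have -> : ((h.*2.+1) ^ 2 - 1 = h * h.+1 * 4)%N by rewrite -mul2n expnS expn1; nia.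
  by rewrite mulnK.
have Hlt (i : 'I_((n.+3 ^ 2 - 1) %/ 4)) : (val i < h * h.+1)%N.
  by rewrite -HN; exact: ltn_ord.
pose ph (i : nat) := phi (av n h i) (bv n h i).
have phinj (i : 'I_((n.+3 ^ 2 - 1) %/ 4)) : injective (ph i).
  exact: phi_inj (det_unit hp Hh (Hlt i)).
exists (fun i w => enc (ph i w)).
split; [|split].
- move=> i w1 w2 /(can_inj (@encK n)); exact: phinj.
- move=> i E /imset2P [w1 w2 _]; rewrite inE => Hadj ->.
  rewrite cards2 (inj_eq (can_inj (@encK n))) (inj_eq (phinj i)).
  by case: eqP Hadj => // ->; rewrite adj_irr.
move=> E /eqP /cards2P [X [Y [XY ->]]].
set d := vsub (dec Y) (dec X).
have Hd : (val d.1 != 0) || (val d.2 != 0).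
  apply/orP; case: (boolP (val d.1 == 0)) => [/eqP D1|]; last by left.
  case: (boolP (val d.2 == 0)) => [/eqP D2|]; last by right.
  exfalso.
  move/negP: XY; apply; apply/eqP.
  rewrite -(decK X) -(decK Y); congr enc.
  apply: (@vsubK n _ _ (dec X)); rewrite -/d.
  by rewrite /vsub !subrr; congr pair; apply: val_inj.
have [Hc Hcases] := cls_ex Hh Hd.
have Hc' : (cls h d < (n.+3 ^ 2 - 1) %/ 4)%N by rewrite HN.
exists (Ordinal Hc'); split.
  have [g gK Kg] := injF_bij (phinj (Ordinal Hc')).
  have Pw : ph (cls h d) (g (dec X)) = dec X := Kg (dec X).
  have [w' [Hadj Hw']] := step_ex (g (dec X)) Hcases.
  apply/imset2P; exists (g (dec X)) w'; first by [].
    by rewrite inE.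
  congr [set _; _]; first by rewrite /= Pw decK.
  rewrite -[Y]decK; congr enc; apply: (@vsubK n _ _ (dec X)).
  by rewrite -/d -Pw.
move=> j /imset2P [v1 v2 _]; rewrite inE => Hadj E2.
case: (set2_eq E2 XY) => [[EX EY]|[EX EY]]; apply: val_inj => /=.
  rewrite /d EX EY !encK; exact: diff_cls Hh (Hlt j) Hadj.
rewrite adj_sym in Hadj.
rewrite /d EX EY !encK; exact: diff_cls Hh (Hlt j) Hadj.
Qed.
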